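(* Let $M$ be observation-rational, and suppose there exists an event $e\in\varepsilon$ that is event-rational and such that $\alpha$ is an $e$-signal. Then for every belief state $b$, $b\diamond\alpha$ is a belief state if and only if $\alpha$ is satisfiable (i.e. not $\vdash\lnot\alpha$).
   Context: Fix a finite propositional vocabulary; $L$ is the classical propositional language and $W$ the finite set of all worlds (valuations). ''$\vdash\lnot\alpha$'' means $\alpha$ is unsatisfiable. A belief state is a probability distribution $b$ on $W$. A model is $M=\langle W,\varepsilon,T,E,O,\mathit{os}\rangle$ with $\varepsilon$ a finite set of events; $T:W\times\varepsilon\times W\to[0,1]$ with $\sum_{w'}T(w,e,w')=1$ for all $w,e$; $E(e,w)\in[0,1]$ the probability of $e$ in $w$; $O:L\times W\to[0,1]$ an observation function ($O(\alpha,w)$ = probability of observing $\alpha$ in $w$, equal for equivalent sentences); $\mathit{os}:L\times W\to[0,1]$. Update: $(b\diamond\alpha)(w')=\frac1\gamma O(\alpha,w')\sum_{w\in W}\sum_{e\in\varepsilon}T(w,e,w')E(e,w)b(w)$ with $\gamma$ the normalizing sum; $b\diamond\alpha$ is a belief state iff $\gamma>0$ and undefined otherwise. $M$ is observation-rational iff for every $\alpha$ with $\vdash\lnot\alpha$, $O(\alpha,w)=0$ for all $w$. An event $e$ is event-rational iff for all $w\in W$: there exists $w'$ with $T(w,e,w')>0$ iff $E(e,w)>0$. $\alpha$ is an $e$-signal iff for all $w'\in W$: there exists $w$ with $T(w,e,w')>0$ iff $O(\alpha,w')>0$. *)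

(* Defs.v *)
From HB Require Import structures.
From mathcomp Require Import all_boot all_order all_algebra.
Set Implicit Arguments. Unset Strict Implicit. Unset Printing Implicit Defensive.
Import Order.TTheory GRing.Theory Num.Theory.
Local Open Scope ring_scope.

Inductive sentence (V : Type) : Type :=
  | FVar of V
  | FBot
  | FNeg of sentence V
  | FAnd of sentence V & sentence V
  | FOr of sentence V & sentence V
  | FImp of sentence V & sentence V.

Definition world (V : finType) := {ffun V -> bool}.

Fixpoint holds (V : finType) (w : world V) (a : sentence V) : bool :=
  match a with
  | FVar p => w p
  | FBot => false
  | FNeg b => ~~ holds w b
  | FAnd b c => holds w b && holds w c
  | FOr b c => holds w b || holds w c
  | FImp b c => holds w b ==> holds w c
  end.

(* |- ~ a : a is unsatisfiable (true in no world). *)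
Definition proves_neg (V : finType) (a : sentence V) : Prop :=
  forall w : world V, ~~ holds w a.

Definition equiv_form (V : finType) (a b : sentence V) : Prop :=
  forall w : world V, holds w a = holds w b.

(* A model <W, eps, T, E, O, os>; W = world V, eps = the finite type Ev. *)
Record bmodel (R : realFieldType) (V : finType) (Ev : finType) := Model {
  T  : world V -> Ev -> world V -> R;
  E  : Ev -> world V -> R;
  O  : sentence V -> world V -> R;
  os : sentence V -> world V -> R
}.

Definition in01 (R : realFieldType) (x : R) := 0 <= x <= 1.

Definition is_model (R : realFieldType) (V Ev : finType) (M : bmodel R V Ev) : Prop :=
  (forall w e w', in01 (T M w e w')) /\
  (forall w e, \sum_(w' : world V) T M w e w' = 1) /\
  (forall e w, in01 (E M e w)) /\
  (forall a w, in01 (O M a w)) /\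
  (forall a b, equiv_form a b -> forall w, O M a w = O M b w) /\
  (forall a w, in01 (os M a w)).

Definition belief_state (R : realFieldType) (V : finType) (b : world V -> R) : Prop :=
  (forall w, 0 <= b w) /\ \sum_(w : world V) b w = 1.

Definition upd_weight (R : realFieldType) (V Ev : finType) (M : bmodel R V Ev)
    (b : world V -> R) (a : sentence V) (w' : world V) : R :=
  O M a w' * \sum_(w : world V) \sum_(e : Ev) T M w e w' * E M e w * b w.

Definition gamma (R : realFieldType) (V Ev : finType) (M : bmodel R V Ev)
    (b : world V -> R) (a : sentence V) : R :=
  \sum_(w' : world V) upd_weight M b a w'.

(* b <> a : defined (Some) iff gamma > 0, undefined (None) otherwise. *)
Definition update (R : realFieldType) (V Ev : finType) (M : bmodel R V Ev)
    (b : world V -> R) (a : sentence V) : option (world V -> R) :=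
  if 0 < gamma M b a then Some (fun w' => (gamma M b a)^-1 * upd_weight M b a w')
  else None.

Definition observation_rational (R : realFieldType) (V Ev : finType) (M : bmodel R V Ev) :=
  forall a : sentence V, proves_neg a -> forall w, O M a w = 0.

Definition event_rational (R : realFieldType) (V Ev : finType) (M : bmodel R V Ev) (e : Ev) :=
  forall w : world V, (exists w', 0 < T M w e w') <-> 0 < E M e w.

Definition signal (R : realFieldType) (V Ev : finType) (M : bmodel R V Ev) (e : Ev) (a : sentence V) :=
  forall w' : world V, (exists w, 0 < T M w e w') <-> 0 < O M a w'.

(* Main.v *)
Require Import Defs.
From mathcomp Require Import all_boot all_order all_algebra.
Import Order.TTheory GRing.Theory Num.Theory.
Local Open Scope ring_scope.

Lemma pos_term (R : realFieldType) (I : finType) (F : I -> R) :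
  (forall i, 0 <= F i) -> \sum_i F i = 1 -> exists i, 0 < F i.
Proof.
move=> F0 F1; case: (boolP [exists i, 0 < F i]) => [/existsP //|/existsP H].
exfalso; have : \sum_i F i = 0.
  apply: big1 => i _; apply/eqP; rewrite eq_le F0 andbT.
  by rewrite leNgt; apply/negP => h; apply: H; exists i.
by rewrite F1 => /eqP; rewrite oner_eq0.
Qed.

Lemma term_le_sum (R : realFieldType) (I : finType) (F : I -> R) j :
  (forall i, 0 <= F i) -> F j <= \sum_i F i.
Proof.
move=> F0; rewrite (bigD1 j) //= lerDl; exact: sumr_ge0.
Qed.

Theorem proposition3 (R : realFieldType) (V Ev : finType) (M : bmodel R V Ev)
  (a : sentence V) :
  is_model M ->
  observation_rational M ->
  (exists e : Ev, event_rational M e /\ signal M e a) ->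
  forall b : world V -> R, belief_state b ->
    ((exists b', update M b a = Some b' /\ belief_state b') <-> ~ proves_neg a).
Proof.
move=> [HT [HTs [HE [HO [_ _]]]]] Hor [e [Her Hsig]] b [b0 b1].
have T0 : forall w e w', 0 <= T M w e w' by move=> w e' w'; case/andP: (HT w e' w').
have E0 : forall e w, 0 <= E M e w by move=> e' w; case/andP: (HE e' w).
have O0 : forall a w, 0 <= O M a w by move=> a0 w; case/andP: (HO a0 w).
have W0 : forall w', 0 <= upd_weight M b a w'.
  move=> w'; rewrite /upd_weight mulr_ge0 //; apply: sumr_ge0 => w _.
  by apply: sumr_ge0 => e' _; rewrite !mulr_ge0.
split.
  move=> [b' [Hu _]] Hn; move: Hu; rewrite /update.
  case: ifP => // Hg _.
  have : gamma M b a = 0.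
    apply: big1 => w' _; by rewrite /upd_weight Hor // mul0r.
  by move=> Hz; rewrite Hz ltxx in Hg.
move=> _.
have [w0 Hw0] := pos_term _ _ _ b0 b1.
have [w' Hw'] := pos_term _ _ _ (T0 w0 e) (HTs w0 e).
have HEp : 0 < E M e w0 by apply/Her; exists w'.
have HOp : 0 < O M a w' by apply/Hsig; exists w0.
have Hg : 0 < gamma M b a.
  apply: (lt_le_trans _ (term_le_sum _ _ _ w' W0)).
  rewrite /upd_weight mulr_gt0 //.
  apply: (lt_le_trans _ (term_le_sum _ _ _ w0 _)); last first.
    by move=> w; apply: sumr_ge0 => e' _; rewrite !mulr_ge0.
  apply: (lt_le_trans _ (term_le_sum _ _ _ e _)); last by move=> e'; rewrite !mulr_ge0.
  by rewrite !mulr_gt0.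
exists (fun w' => (gamma M b a)^-1 * upd_weight M b a w').
rewrite /update Hg; split => //; split.
  by move=> w; rewrite mulr_ge0 // invr_ge0 ltW.
rewrite -mulr_sumr mulVf //; exact: lt0r_neq0.
Qed.
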